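(* For every $\delta\in\mathbb R$, $$\prod_{j=1}^r\Big(D_j^2-\big(\delta+\rho(\xi_1)\big)^2\Big)\, f_\delta\;=\;\prod_{j=1}^r\big(\delta+a(j-1)\big)\big(1-\delta-\iota-a(r-j)\big)\; f_{\delta-2},$$ where $\rho(\xi_1)=\iota+b+a(r-1)$. In particular the $W$-invariant polynomial $\prod_{j}(D_j^2-(\delta+\rho(\xi_1))^2)$ in the Cherednik operators maps $f_\delta$ to a constant multiple of $f_{\delta-2}$.
   Context: Let $r\ge 1$ and $a,b,\iota>0$ be real numbers. Let $\mathfrak a=\mathbb R^r$ with orthonormal basis $\xi_1,\dots,\xi_r$, write $t=\sum_j t_j\xi_j$, and let $\varepsilon_1,\dots,\varepsilon_r$ be the dual basis. $R$ is the root system of type $BC_r$ with positive roots $2\varepsilon_j$ (multiplicity $b$), $4\varepsilon_j$ (multiplicity $\iota/2$), and $2(\varepsilon_j\pm\varepsilon_k)$, $j<k$ (multiplicity $a/2$). Its half-sum of positive roots is $\rho=\sum_j\rho_j\varepsilon_j$ with $\rho_j=\rho(\xi_j)=\iota+b+a(r-j)$. The Weyl group $W$ is the group of signed permutations of coordinates; it acts on functions by permuting/changing signs of the variables. Let $s_{ij}$ swap $t_i$ and $t_j$, let $\sigma_{ij}$ send $(t_i,t_j)\mapsto(-t_j,-t_i)$, and let $\sigma_i$ send $t_i\mapsto -t_i$ (all other coordinates fixed). The Cherednik operators acting on smooth functions on $\mathfrak a$ are $$D_j=\partial_{t_j}-a\sum_{i<j}\frac{1-s_{ij}}{1-e^{-2(t_i-t_j)}}+a\sum_{k>j}\frac{1-s_{jk}}{1-e^{-2(t_j-t_k)}}+a\sum_{k\ne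 j}\frac{1-\sigma_{jk}}{1-e^{-2(t_j+t_k)}}+2\iota\frac{1-\sigma_j}{1-e^{-4t_j}}+2b\frac{1-\sigma_j}{1-e^{-2t_j}}-\rho_j,$$ $j=1,\dots,r$; they pairwise commute, so products of them are unambiguous. For $\delta\in\mathbb R$ the canonical function is $f_\delta(t)=\prod_{j=1}^r\cosh^{\delta}t_j$. *)

(* Defs.v *)
From Stdlib Require Import Reals Lra Arith.
From Coquelicot Require Import Coquelicot.
Open Scope R_scope.

(* Points of a = R^r are represented as t : nat -> R; only the coordinates
   t 0, ..., t (r-1) are ever used (coordinate t_{j+1} of the paper is t j). *)
Definition pt := nat -> R.
Definition func := pt -> R.

Fixpoint rsum (n : nat) (F : nat -> R) : R :=
  match n with O => 0 | S m => rsum m F + F m end.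

Fixpoint rprod (n : nat) (F : nat -> R) : R :=
  match n with O => 1 | S m => rprod m F * F m end.

Definition upd (t : pt) (j : nat) (s : R) : pt :=
  fun k => if Nat.eqb k j then s else t k.

Definition swap (i j : nat) (t : pt) : pt :=
  fun k => if Nat.eqb k i then t j else if Nat.eqb k j then t i else t k.
Definition sigma2 (i j : nat) (t : pt) : pt :=
  fun k => if Nat.eqb k i then - t j else if Nat.eqb k j then - t i else t k.
Definition sigma1 (i : nat) (t : pt) : pt :=
  fun k => if Nat.eqb k i then - t i else t k.

(* rho_j for the 0-based index j (paper's index j+1): iota + b + a (r - (j+1)) *)
Definition rho (r : nat) (a b iota : R) (j : nat) : R :=
  iota + b + a * INR (r - 1 - j).

Definition cherednik (r : nat) (a b iota : R) (j : nat) (g : func) : func :=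
  fun t =>
    Derive (fun s => g (upd t j s)) (t j)
    - a * rsum j (fun i => (g t - g (swap i j t)) / (1 - exp (-2 * (t i - t j))))
    + a * rsum r (fun k => if Nat.ltb j k
                           then (g t - g (swap j k t)) / (1 - exp (-2 * (t j - t k)))
                           else 0)
    + a * rsum r (fun k => if Nat.eqb k j then 0
                           else (g t - g (sigma2 j k t)) / (1 - exp (-2 * (t j + t k))))
    + 2 * iota * ((g t - g (sigma1 j t)) / (1 - exp (-4 * t j)))
    + 2 * b * ((g t - g (sigma1 j t)) / (1 - exp (-2 * t j)))
    - rho r a b iota j * g t.

Definition factor_op (r : nat) (a b iota c : R) (j : nat) (g : func) : func :=
  fun t => cherednik r a b iota j (cherednik r a b iota j g) t - c ^ 2 * g t.

(* the composite  prod_{j < n} (D_j^2 - c^2)  (the D_j commute, order irrelevant) *)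
Fixpoint prod_ops (n : nat) (r : nat) (a b iota c : R) (g : func) : func :=
  match n with
  | O => g
  | S m => factor_op r a b iota c m (prod_ops m r a b iota c g)
  end.

Definition f_can (r : nat) (delta : R) : func :=
  fun t => rprod r (fun j => Rpower (cosh (t j)) delta).

(* regular points: off all root hyperplanes of BC_r (where the formula for D_j
   is literally defined; the smooth extension is by continuity) *)
Definition regular (r : nat) (t : pt) : Prop :=
  (forall j, (j < r)%nat -> t j <> 0) /\
  (forall i j, (i < r)%nat -> (j < r)%nat -> i <> j -> t i <> t j /\ t i <> - t j).

(* Main.v *)
Require Import Defs.
From Stdlib Require Import Reals Lra Lia Arith FunctionalExtensionality.
From Coquelicot Require Import Coquelicot.
Open Scope R_scope.

Lemma rsum_ext n F G : (forall k, (k < n)%nat -> F k = G k) -> rsum n F = rsum n G.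
Proof. induction n; intros H; simpl; auto. rewrite IHn; [rewrite H|]; auto; intros; apply H; lia. Qed.
Lemma rprod_ext n F G : (forall k, (k < n)%nat -> F k = G k) -> rprod n F = rprod n G.
Proof. induction n; intros H; simpl; auto. rewrite IHn; [rewrite H|]; auto; intros; apply H; lia. Qed.
Lemma rsum_plus n F G : rsum n (fun k => F k + G k) = rsum n F + rsum n G.
Proof. induction n; simpl; [lra|rewrite IHn; lra]. Qed.
Lemma rsum_scal n c F : rsum n (fun k => c * F k) = c * rsum n F.
Proof. induction n; simpl; [lra|rewrite IHn; lra]. Qed.
Lemma rsum_zero n F : (forall k, (k < n)%nat -> F k = 0) -> rsum n F = 0.
Proof. intros H; rewrite (rsum_ext n F (fun _ => 0)); auto. clear H. induction n; simpl; auto; rewrite IHn; lra. Qed.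
Lemma rsum_split m n F : rsum (m + n) F = rsum m F + rsum n (fun k => F (m + k)%nat).
Proof. induction n. rewrite Nat.add_0_r; simpl; lra. rewrite Nat.add_succ_r; simpl; rewrite IHn; lra. Qed.
Lemma rsum_shift n F : rsum (S n) F = F O + rsum n (fun k => F (S k)).
Proof. induction n; simpl in *; [lra|]. rewrite IHn; lra. Qed.
Lemma rprod_mult n F G : rprod n (fun k => F k * G k) = rprod n F * rprod n G.
Proof. induction n; simpl; [lra|rewrite IHn; lra]. Qed.
Lemma rprod_shift n F : rprod (S n) F = F O * rprod n (fun k => F (S k)).
Proof. induction n; simpl in *; [lra|]. rewrite IHn; lra. Qed.
Lemma rprod_rev n F : rprod n (fun j => F (n - 1 - j)%nat) = rprod n F.
Proof.
  revert F; induction n; intros F; auto.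
  rewrite (rprod_shift n F). change (rprod (S n) (fun j => F (S n - 1 - j)%nat)) with
    (rprod n (fun j => F (S n - 1 - j)%nat) * F (S n - 1 - n)%nat).
  rewrite (rprod_ext n _ (fun j => (fun k => F (S k)) (n - 1 - j)%nat)).
  rewrite (IHn (fun k => F (S k))). replace (S n - 1 - n)%nat with O by lia. lra.
  intros; f_equal; lia.
Qed.
Definition excl (F : nat -> R) (i : nat) : nat -> R := fun k => if Nat.eqb k i then 1 else F k.
Lemma rprod_excl n F i : (i < n)%nat -> rprod n F = F i * rprod n (excl F i).
Proof.
  induction n; intros H; [lia|]. simpl.
  destruct (Nat.eq_dec i n).
  - subst. unfold excl at 2. rewrite Nat.eqb_refl.
    rewrite (rprod_ext n (excl F n) F). lra.
    intros k Hk; unfold excl; destruct (Nat.eqb_spec k n); [lia|auto].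
  - rewrite IHn by lia. unfold excl at 3. destruct (Nat.eqb_spec n i); [lia|]. lra.
Qed.
Lemma rprod_two n F G i j : (i < n)%nat -> (j < n)%nat -> i <> j ->
  (forall k, (k < n)%nat -> k <> i -> k <> j -> G k = F k) -> G i * G j = F i * F j ->
  rprod n G = rprod n F.
Proof.
  intros Hi Hj Hij H H2.
  rewrite (rprod_excl n G i), (rprod_excl n (excl G i) j) by auto.
  rewrite (rprod_excl n F i), (rprod_excl n (excl F i) j) by auto.
  assert (E1 : excl G i j = G j) by (unfold excl; destruct (Nat.eqb_spec j i); [lia|auto]).
  assert (E2 : excl F i j = F j) by (unfold excl; destruct (Nat.eqb_spec j i); [lia|auto]).
  rewrite E1, E2.
  rewrite (rprod_ext n (excl (excl G i) j) (excl (excl F i) j)).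
  - replace (G i * (G j * rprod n (excl (excl F i) j))) with ((G i * G j) * rprod n (excl (excl F i) j)) by ring.
    rewrite H2; ring.
  - intros k Hk; unfold excl. destruct (Nat.eqb_spec k j); auto. destruct (Nat.eqb_spec k i); auto.
Qed.
Lemma rprod_one n F G i : (i < n)%nat ->
  (forall k, (k < n)%nat -> k <> i -> G k = F k) -> G i = F i -> rprod n G = rprod n F.
Proof.
  intros Hi H H2. rewrite (rprod_excl n G i), (rprod_excl n F i) by auto. rewrite H2.
  f_equal. apply rprod_ext; intros k Hk; unfold excl; destruct (Nat.eqb_spec k i); auto.
Qed.

Definition th (x : R) : R := (exp x - exp (- x)) / (exp x + exp (- x)).
Lemma th_A x : th x = (exp (2 * x) - 1) / (exp (2 * x) + 1).
Proof.
  unfold th. replace (2 * x) with (x + x) by ring. rewrite exp_plus, exp_Ropp.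
  assert (exp x > 0) by apply exp_pos. field; split; nra.
Qed.
Lemma th_bounds x : -1 < th x < 1.
Proof.
  rewrite th_A. assert (exp (2*x) > 0) by apply exp_pos.
  split; [apply Rlt_div_r|apply Rlt_div_l]; lra.
Qed.
Lemma th_opp x : th (- x) = - th x.
Proof. unfold th. rewrite Ropp_involutive. field. assert (exp x > 0) by apply exp_pos.
  assert (exp (-x) > 0) by apply exp_pos. lra. Qed.
Lemma exp2_inj x y : exp (2 * x) = exp (2 * y) -> x = y.
Proof. intros H. apply exp_inv in H. lra. Qed.
Lemma th_inj x y : th x = th y -> x = y.
Proof.
  rewrite !th_A. intros H. apply exp2_inj.
  assert (exp (2*x) > 0) by apply exp_pos. assert (exp (2*y) > 0) by apply exp_pos.
  apply (f_equal (fun v => (1 + v) / (1 - v))) in H.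
  replace ((1 + (exp (2 * x) - 1) / (exp (2 * x) + 1)) / (1 - (exp (2 * x) - 1) / (exp (2 * x) + 1)))
    with (exp (2*x)) in H by (field; lra).
  replace ((1 + (exp (2 * y) - 1) / (exp (2 * y) + 1)) / (1 - (exp (2 * y) - 1) / (exp (2 * y) + 1)))
    with (exp (2*y)) in H by (field; lra). auto.
Qed.
Lemma th_0 : th 0 = 0.
Proof. unfold th. rewrite Ropp_0. lra. Qed.
Lemma th_nz x : x <> 0 -> th x <> 0.
Proof. intros H E. apply H. apply th_inj. rewrite E, th_0. auto. Qed.

Definition Kswap (p q : R) := (1 + p) * (1 - q) / (2 * (p - q)).
Definition Ksig (p q : R) := (1 + p) * (1 + q) / (2 * (p + q)).
Definition K1 (p : R) := (1 + p) / (2 * p).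
Definition K2 (p : R) := (1 + p) * (1 + p) / (4 * p).

Lemma Kswap_ok x y : x <> y -> / (1 - exp (-2 * (x - y))) = Kswap (th x) (th y).
Proof.
  intros H. unfold Kswap. rewrite !th_A.
  replace (-2 * (x - y)) with (2 * y + - (2 * x)) by ring. rewrite exp_plus, exp_Ropp.
  assert (A : exp (2*x) > 0) by apply exp_pos. assert (B : exp (2*y) > 0) by apply exp_pos.
  assert (exp (2*x) <> exp (2*y)) by (intros E; apply H; apply exp2_inj; auto).
  assert (exp (2 * x) - exp (2*y) <> 0) by lra.
  field. repeat split; try lra.
Qed.
Lemma Ksig_ok x y : x <> - y -> / (1 - exp (-2 * (x + y))) = Ksig (th x) (th y).
Proof.
  intros H. unfold Ksig. rewrite !th_A.
  replace (-2 * (x + y)) with (- (2 * x + 2 * y)) by ring. rewrite exp_Ropp, exp_plus.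
  assert (A : exp (2*x) > 0) by apply exp_pos. assert (B : exp (2*y) > 0) by apply exp_pos.
  assert (exp (2*x) * exp (2*y) <> 1).
  { intros E. apply H. rewrite <- exp_plus in E. rewrite <- exp_0 in E. apply exp_inv in E. lra. }
  field. repeat split; try lra; try (intros E; apply H0; nra).
Qed.
Lemma K1_ok x : x <> 0 -> / (1 - exp (-2 * x)) = K1 (th x).
Proof.
  intros H. unfold K1. rewrite !th_A.
  replace (-2 * x) with (- (2 * x)) by ring. rewrite exp_Ropp.
  assert (A : exp (2*x) > 0) by apply exp_pos.
  assert (exp (2*x) <> 1) by (intros E; apply H; rewrite <- exp_0 in E; apply exp_inv in E; lra).
  field. repeat split; try lra.
Qed.
Lemma K2_ok x : x <> 0 -> / (1 - exp (-4 * x)) = K2 (th x).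
Proof.
  intros H. unfold K2. rewrite !th_A.
  replace (-4 * x) with (- (2 * x + 2 * x)) by ring. rewrite exp_Ropp, exp_plus.
  assert (A : exp (2*x) > 0) by apply exp_pos.
  assert (exp (2*x) <> 1) by (intros E; apply H; rewrite <- exp_0 in E; apply exp_inv in E; lra).
  field. repeat split; try lra; try (intros E; apply H0; nra).
Qed.

Definition hc (d s : R) := Rpower (cosh s) d.
Lemma cosh_pos s : 0 < cosh s.
Proof. unfold cosh. assert (exp s > 0) by apply exp_pos. assert (exp (-s) > 0) by apply exp_pos. lra. Qed.
Lemma hc_der d x : is_derive (hc d) x (d * th x * hc d x).
Proof.
  unfold hc, Rpower, th.
  assert (P: 0 < cosh x) by apply cosh_pos. unfold cosh in *.
  assert (exp x > 0) by apply exp_pos. assert (exp (-x) > 0) by apply exp_pos.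
  auto_derive. lra. unfold Rdiv. field. lra.
Qed.
Lemma th_der x : is_derive th x (1 - th x * th x).
Proof.
  unfold th. assert (exp x > 0) by apply exp_pos. assert (exp (-x) > 0) by apply exp_pos.
  auto_derive. lra. field. lra.
Qed.
Definition Uv (t : pt) : pt := fun j => th (t j).
Definition FQ r d (Q : pt -> R) : func := fun t => f_can r d t * Q (Uv t).
Lemma Uv_upd t j s : Uv (upd t j s) = upd (Uv t) j (th s).
Proof. apply functional_extensionality; intros k; unfold Uv, upd. destruct (Nat.eqb k j); auto. Qed.

Lemma upd_same (u : pt) j : upd u j (u j) = u.
Proof. apply functional_extensionality; intros k; unfold upd. destruct (Nat.eqb_spec k j); subst; auto. Qed.

Lemma f_can_excl r d t j : (j < r)%nat ->
  f_can r d t = hc d (t j) * rprod r (excl (fun k => hc d (t k)) j).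
Proof. intros H. unfold f_can. apply (rprod_excl r (fun k => hc d (t k)) j H). Qed.

Lemma f_can_upd r d t j s : (j < r)%nat ->
  f_can r d (upd t j s) = hc d s * rprod r (excl (fun k => hc d (t k)) j).
Proof.
  intros H. unfold f_can. rewrite (rprod_excl r _ j H). unfold upd at 1. rewrite Nat.eqb_refl.
  f_equal. apply rprod_ext. intros k Hk. unfold excl, upd. destruct (Nat.eqb k j); auto.
Qed.

Lemma FQ_derive r d Q t j dQ : (j < r)%nat ->
  is_derive (fun x => Q (upd (Uv t) j x)) (th (t j)) dQ ->
  Derive (fun s => FQ r d Q (upd t j s)) (t j) =
  f_can r d t * (d * th (t j) * Q (Uv t) + (1 - th (t j) * th (t j)) * dQ).
Proof.
  intros Hj HQ.
  set (C := rprod r (excl (fun k => hc d (t k)) j)).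
  assert (D1 : is_derive (fun s => Q (upd (Uv t) j (th s))) (t j) (scal (1 - th (t j) * th (t j)) dQ)).
  { apply (is_derive_comp (fun x => Q (upd (Uv t) j x)) th). exact HQ. apply th_der. }
  assert (D2 := is_derive_mult _ _ _ _ _ (hc_der d (t j)) D1 (fun n m => Rmult_comm n m)).
  assert (D3 := is_derive_mult _ _ _ _ _ (is_derive_const C (t j)) D2 (fun n m => Rmult_comm n m)).
  simpl in D3.
  rewrite (Derive_ext _ (fun x => mult C (mult (hc d x) (Q (upd (Uv t) j (th x)))))).
  2: { intros s. unfold FQ. rewrite f_can_upd, Uv_upd by auto. fold C. unfold mult; simpl; ring. }
  apply is_derive_unique in D3. etransitivity; [exact D3|].
  rewrite (f_can_excl r d t j Hj). fold C.
  replace (th (t j)) with (Uv t j) by reflexivity. rewrite upd_same.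
  unfold mult, plus, scal, zero; simpl. unfold mult; simpl. unfold Uv. ring.
Qed.

Lemma cosh_opp x : cosh (- x) = cosh x.
Proof. unfold cosh. rewrite Ropp_involutive. lra. Qed.

Lemma Uv_swap t i j : Uv (swap i j t) = swap i j (Uv t).
Proof. apply functional_extensionality; intros k; unfold Uv, swap. destruct (Nat.eqb k i); [|destruct (Nat.eqb k j)]; auto. Qed.
Lemma Uv_sigma2 t i j : Uv (sigma2 i j t) = sigma2 i j (Uv t).
Proof. apply functional_extensionality; intros k; unfold Uv, sigma2. destruct (Nat.eqb k i); [|destruct (Nat.eqb k j)]; auto; apply th_opp. Qed.
Lemma Uv_sigma1 t j : Uv (sigma1 j t) = sigma1 j (Uv t).
Proof. apply functional_extensionality; intros k; unfold Uv, sigma1. destruct (Nat.eqb k j); auto; apply th_opp. Qed.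

Lemma f_can_swap r d t i j : (i < r)%nat -> (j < r)%nat -> f_can r d (swap i j t) = f_can r d t.
Proof.
  intros Hi Hj. unfold f_can. destruct (Nat.eq_dec i j).
  - subst. apply rprod_ext; intros k _; unfold swap. destruct (Nat.eqb_spec k j); subst; auto.
  - apply (rprod_two r _ _ i j); auto.
    + intros k _ H1 H2; unfold swap. destruct (Nat.eqb_spec k i); [lia|]. destruct (Nat.eqb_spec k j); [lia|auto].
    + unfold swap. rewrite Nat.eqb_refl. destruct (Nat.eqb_spec j i); [lia|]. rewrite Nat.eqb_refl. ring.
Qed.
Lemma f_can_sigma2 r d t i j : (i < r)%nat -> (j < r)%nat -> i <> j -> f_can r d (sigma2 i j t) = f_can r d t.
Proof.
  intros Hi Hj Hij. unfold f_can.
  apply (rprod_two r _ _ i j); auto.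
  + intros k _ H1 H2; unfold sigma2. destruct (Nat.eqb_spec k i); [lia|]. destruct (Nat.eqb_spec k j); [lia|auto].
  + unfold sigma2. rewrite Nat.eqb_refl. destruct (Nat.eqb_spec j i); [lia|]. rewrite Nat.eqb_refl.
    rewrite !cosh_opp. ring.
Qed.
Lemma f_can_sigma1 r d t j : (j < r)%nat -> f_can r d (sigma1 j t) = f_can r d t.
Proof.
  intros Hj. unfold f_can. apply (rprod_one r _ _ j); auto.
  + intros k _ H1; unfold sigma1. destruct (Nat.eqb_spec k j); [lia|auto].
  + unfold sigma1. rewrite Nat.eqb_refl, cosh_opp. auto.
Qed.

Definition TQ r a b io d j (Q : pt -> R) (dQ : R) (u : pt) : R :=
  d * u j * Q u + (1 - u j * u j) * dQ
  - a * rsum j (fun i => Kswap (u i) (u j) * (Q u - Q (swap i j u)))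
  + a * rsum r (fun k => if Nat.ltb j k then Kswap (u j) (u k) * (Q u - Q (swap j k u)) else 0)
  + a * rsum r (fun k => if Nat.eqb k j then 0 else Ksig (u j) (u k) * (Q u - Q (sigma2 j k u)))
  + 2 * io * (K2 (u j) * (Q u - Q (sigma1 j u)))
  + 2 * b * (K1 (u j) * (Q u - Q (sigma1 j u)))
  - rho r a b io j * Q u.

Lemma cher_FQ r a b io d j Q dQ t : (j < r)%nat -> regular r t ->
  is_derive (fun x => Q (upd (Uv t) j x)) (th (t j)) dQ ->
  cherednik r a b io j (FQ r d Q) t = f_can r d t * TQ r a b io d j Q dQ (Uv t).
Proof.
  intros Hj [R1 R2] HQ. unfold cherednik. rewrite (FQ_derive r d Q t j dQ Hj HQ).
  set (f := f_can r d t). set (u := Uv t).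
  rewrite (rsum_ext j (fun i => (FQ r d Q t - FQ r d Q (swap i j t)) / (1 - exp (-2 * (t i - t j))))
     (fun i => f * (Kswap (u i) (u j) * (Q u - Q (swap i j u))))).
  2: { intros i Hi. unfold FQ. rewrite f_can_swap, Uv_swap by lia. fold f u.
       unfold Rdiv. rewrite Kswap_ok by (apply (R2 i j); lia). unfold u, Uv. ring. }
  rewrite (rsum_ext r (fun k => if Nat.ltb j k then (FQ r d Q t - FQ r d Q (swap j k t)) / (1 - exp (-2 * (t j - t k))) else 0)
    (fun k => f * (if Nat.ltb j k then Kswap (u j) (u k) * (Q u - Q (swap j k u)) else 0))).
  2: { intros k Hk. destruct (Nat.ltb_spec j k); [|cbv iota; ring].
       unfold FQ. rewrite f_can_swap, Uv_swap by lia. fold f u.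
       unfold Rdiv. rewrite Kswap_ok by (apply (R2 j k); lia). unfold u, Uv. ring. }
  rewrite (rsum_ext r (fun k => if Nat.eqb k j then 0 else (FQ r d Q t - FQ r d Q (sigma2 j k t)) / (1 - exp (-2 * (t j + t k))))
    (fun k => f * (if Nat.eqb k j then 0 else Ksig (u j) (u k) * (Q u - Q (sigma2 j k u))))).
  2: { intros k Hk. destruct (Nat.eqb_spec k j); [cbv iota; ring|].
       unfold FQ. rewrite f_can_sigma2, Uv_sigma2 by lia. fold f u.
       unfold Rdiv. rewrite Ksig_ok by (apply (R2 j k); lia). unfold u, Uv. ring. }
  rewrite !rsum_scal.
  unfold FQ. rewrite f_can_sigma1, Uv_sigma1 by lia. fold f u.
  unfold Rdiv. rewrite K1_ok, K2_ok by (apply R1; lia).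
  unfold TQ. unfold u, Uv. ring.
Qed.

Lemma reg_perm r t s (pi : nat -> nat) : regular r t ->
  (forall k, (k < r)%nat -> (pi k < r)%nat /\ (s k = t (pi k) \/ s k = - t (pi k))) ->
  (forall k l, (k < r)%nat -> (l < r)%nat -> pi k = pi l -> k = l) -> regular r s.
Proof.
  intros [R1 R2] H Hinj. split.
  - intros k Hk. destruct (H k Hk) as [Hp [E|E]]; rewrite E; [apply R1; auto|].
    intros E2. apply (R1 (pi k) Hp). lra.
  - intros k l Hk Hl Hkl. destruct (H k Hk) as [Hp [E|E]]; destruct (H l Hl) as [Hq [E'|E']];
    rewrite E, E'; assert (pi k <> pi l) by (intros F; apply Hkl; apply Hinj; auto);
    destruct (R2 (pi k) (pi l) Hp Hq H0); split; lra.
Qed.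

Definition tr (i j k : nat) : nat := if Nat.eqb k i then j else if Nat.eqb k j then i else k.
Lemma tr_inj i j k l : tr i j k = tr i j l -> k = l.
Proof. unfold tr. destruct (Nat.eqb_spec k i), (Nat.eqb_spec k j), (Nat.eqb_spec l i), (Nat.eqb_spec l j); lia. Qed.
Lemma tr_lt r i j k : (i < r)%nat -> (j < r)%nat -> (k < r)%nat -> (tr i j k < r)%nat.
Proof. unfold tr. destruct (Nat.eqb_spec k i), (Nat.eqb_spec k j); lia. Qed.

Lemma reg_swap r t i j : regular r t -> (i < r)%nat -> (j < r)%nat -> regular r (swap i j t).
Proof.
  intros R Hi Hj. apply (reg_perm r t _ (tr i j) R).
  - intros k Hk. split; [apply tr_lt; auto|left]. unfold swap, tr.
    destruct (Nat.eqb k i); [|destruct (Nat.eqb k j)]; auto.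
  - intros k l _ _; apply tr_inj.
Qed.
Lemma reg_sigma2 r t i j : regular r t -> (i < r)%nat -> (j < r)%nat -> regular r (sigma2 i j t).
Proof.
  intros R Hi Hj. apply (reg_perm r t _ (tr i j) R).
  - intros k Hk. split; [apply tr_lt; auto|]. unfold sigma2, tr.
    destruct (Nat.eqb k i); [|destruct (Nat.eqb k j)]; auto.
  - intros k l _ _; apply tr_inj.
Qed.
Lemma reg_sigma1 r t j : regular r t -> (j < r)%nat -> regular r (sigma1 j t).
Proof.
  intros R Hj. apply (reg_perm r t _ (fun k => k) R).
  - intros k0 Hk. split; auto. unfold sigma1. destruct (Nat.eqb_spec k0 j); subst; auto.
  - intros k0 l _ _ E; exact E.
Qed.

Lemma loc_neq (x c : R) : x <> c -> locally x (fun s => s <> c).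
Proof.
  intros H. assert (P : 0 < Rabs (x - c)) by (apply Rabs_pos_lt; lra).
  exists (mkposreal _ P). intros y Hy. simpl in Hy.
  unfold ball in Hy; simpl in Hy; unfold AbsRing_ball, abs, minus, plus, opp in Hy; simpl in Hy.
  intros E; subst. replace (c + - x) with (- (x - c)) in Hy by ring. rewrite Rabs_Ropp in Hy. lra.
Qed.
Lemma loc_forall (x : R) n (P : nat -> R -> Prop) :
  (forall k, (k < n)%nat -> locally x (P k)) -> locally x (fun s => forall k, (k < n)%nat -> P k s).
Proof.
  induction n; intros H.
  - apply (@filter_forall _ (locally x) _). intros; lia.
  - assert (A := @filter_and _ (locally x) _ _ _ (IHn (fun k Hk => H k ltac:(lia))) (H n ltac:(lia))).
    revert A; apply (@filter_imp _ (locally x) _). intros s [B C] k Hk.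
    destruct (Nat.eq_dec k n); [subst; auto|]. apply B; lia.
Qed.

Lemma reg_open r t j : regular r t -> (j < r)%nat -> locally (t j) (fun s => regular r (upd t j s)).
Proof.
  intros [R1 R2] Hj.
  assert (L0 : locally (t j) (fun s => s <> 0)) by (apply loc_neq, R1; auto).
  assert (L1 : locally (t j) (fun s => forall k, (k < r)%nat -> k <> j -> s <> t k /\ s <> - t k)).
  { apply (filter_imp (fun s => forall k, (k < r)%nat -> (k <> j -> s <> t k) /\ (k <> j -> s <> - t k))).
    { intros s H k Hk Hkj. destruct (H k Hk). auto. }
    apply loc_forall. intros k Hk. apply filter_and.
    - destruct (Nat.eq_dec k j). { apply (@filter_forall _ (locally (t j)) _); intros; lia. }
      apply (filter_imp (fun s => s <> t k)); [auto|]. apply loc_neq. apply (R2 j k); auto.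
    - destruct (Nat.eq_dec k j). { apply (@filter_forall _ (locally (t j)) _); intros; lia. }
      apply (filter_imp (fun s => s <> - t k)); [auto|]. apply loc_neq. apply (R2 j k); auto. }
  generalize (filter_and _ _ L0 L1); apply filter_imp. intros s [H0 H1]. split.
  - intros k Hk. unfold upd. destruct (Nat.eqb_spec k j); auto.
  - intros k l Hk Hl Hkl. unfold upd.
    destruct (Nat.eqb_spec k j), (Nat.eqb_spec l j); subst; try lia.
    + destruct (H1 l Hl); auto.
    + destruct (H1 k Hk); auto. split; lra.
    + apply R2; auto.
Qed.

Lemma cher_local r a b io j H1 H2 t : (forall t', regular r t' -> H1 t' = H2 t') ->
  regular r t -> (j < r)%nat -> cherednik r a b io j H1 t = cherednik r a b io j H2 t.
Proof.
  intros E R Hj. unfold cherednik.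
  rewrite (Derive_ext_loc (fun s => H1 (upd t j s)) (fun s => H2 (upd t j s))).
  2: { generalize (reg_open r t j R Hj); apply filter_imp. intros s Hs; apply E; auto. }
  rewrite (E t R).
  rewrite (rsum_ext j (fun i => (H2 t - H1 (swap i j t)) / (1 - exp (-2 * (t i - t j))))
                      (fun i => (H2 t - H2 (swap i j t)) / (1 - exp (-2 * (t i - t j))))).
  2: { intros i Hi. rewrite E; auto. apply reg_swap; auto; lia. }
  rewrite (rsum_ext r (fun k => if Nat.ltb j k then (H2 t - H1 (swap j k t)) / (1 - exp (-2 * (t j - t k))) else 0)
                      (fun k => if Nat.ltb j k then (H2 t - H2 (swap j k t)) / (1 - exp (-2 * (t j - t k))) else 0)).
  2: { intros k Hk. rewrite E; auto. apply reg_swap; auto. }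
  rewrite (rsum_ext r (fun k => if Nat.eqb k j then 0 else (H2 t - H1 (sigma2 j k t)) / (1 - exp (-2 * (t j + t k))))
                      (fun k => if Nat.eqb k j then 0 else (H2 t - H2 (sigma2 j k t)) / (1 - exp (-2 * (t j + t k))))).
  2: { intros k Hk. rewrite E; auto. apply reg_sigma2; auto. }
  rewrite (E (sigma1 j t)); auto. apply reg_sigma1; auto.
Qed.

Fixpoint esym (n k : nat) (z : nat -> R) : R :=
  match n with
  | O => match k with O => 1 | S _ => 0 end
  | S n' => match k with O => 1 | S k' => esym n' k z + z n' * esym n' k' z end
  end.

Lemma esym_0 n z : esym n 0 z = 1.
Proof. destruct n; auto. Qed.
Lemma esym_S n k z : esym (S n) (S k) z = esym n (S k) z + z n * esym n k z.
Proof. reflexivity. Qed.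
Lemma esym_ext n k z z' : (forall j, (j < n)%nat -> z j = z' j) -> esym n k z = esym n k z'.
Proof.
  revert k; induction n; intros k H; [destruct k; auto|].
  destruct k; auto. rewrite !esym_S, H by lia. rewrite !IHn by (intros; apply H; lia). auto.
Qed.
Lemma esym_big n k z : (n < k)%nat -> esym n k z = 0.
Proof.
  revert k; induction n; intros k H; [destruct k; [lia|auto]|].
  destruct k; [lia|]. rewrite esym_S, !IHn by lia. ring.
Qed.
Lemma esym_top n z : esym n n z = rprod n z.
Proof.
  induction n; auto. rewrite esym_S, esym_big, IHn by lia. simpl. ring.
Qed.
Lemma esym_upd_far n k z i w : (n <= i)%nat -> esym n k (upd z i w) = esym n k z.
Proof. intros H; apply esym_ext. intros j Hj; unfold upd. destruct (Nat.eqb_spec j i); [lia|auto]. Qed.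

Lemma esym_affine n k z i w :
  esym n k (upd z i w) = esym n k (upd z i 0) + w * (esym n k (upd z i 1) - esym n k (upd z i 0)).
Proof.
  revert k; induction n; intros k; [destruct k; simpl; ring|].
  destruct k; [rewrite !esym_0; ring|]. rewrite !esym_S.
  destruct (Nat.eq_dec n i).
  - subst. rewrite !esym_upd_far by lia. unfold upd; rewrite Nat.eqb_refl. ring.
  - assert (E : forall v, upd z i v n = z n) by (intros; unfold upd; destruct (Nat.eqb_spec n i); [lia|auto]).
    rewrite !E. rewrite (IHn (S k)), (IHn k). ring.
Qed.

Lemma rsum_S n F : rsum (S n) F = rsum n F + F n.
Proof. reflexivity. Qed.

Definition Dl (F : (nat -> R) -> R) (z : nat -> R) (i : nat) : R := F (upd z i 1) - F (upd z i 0).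

Lemma Dl_esym_S n k z i : (i < n)%nat ->
  Dl (esym (S n) (S k)) z i = Dl (esym n (S k)) z i + z n * Dl (esym n k) z i.
Proof.
  intros H. unfold Dl. rewrite !esym_S.
  assert (E : forall v, upd z i v n = z n) by (intros; unfold upd; destruct (Nat.eqb_spec n i); [lia|auto]).
  rewrite !E. ring.
Qed.
Lemma Dl_esym_last n k z : Dl (esym (S n) (S k)) z n = esym n k z.
Proof.
  unfold Dl. rewrite !esym_S, !esym_upd_far by lia. unfold upd; rewrite Nat.eqb_refl. ring.
Qed.
Lemma Dl_esym_0 n z i : Dl (esym n 0) z i = 0.
Proof. unfold Dl; rewrite !esym_0; ring. Qed.

Lemma sum_Dl_esym n k z : rsum n (fun i => Dl (esym n (S k)) z i) = (INR n - INR k) * esym n k z.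
Proof.
  revert k; induction n; intros k.
  - simpl. destruct k; simpl; ring.
  - rewrite rsum_S. rewrite (rsum_ext n _ (fun i => Dl (esym n (S k)) z i + z n * Dl (esym n k) z i)).
    2: { intros; apply Dl_esym_S; auto. }
    rewrite rsum_plus, rsum_scal, IHn, Dl_esym_last.
    destruct k.
    + rewrite (rsum_ext n _ (fun _ => 0)) by (intros; apply Dl_esym_0).
      rewrite (rsum_zero n (fun _ => 0)) by auto. rewrite !esym_0, S_INR. simpl. ring.
    + rewrite IHn, esym_S, !S_INR. ring.
Qed.
Lemma sum_zDl_esym n k z : rsum n (fun i => z i * Dl (esym n k) z i) = INR k * esym n k z.
Proof.
  revert k; induction n; intros k.
  - simpl. destruct k; simpl; ring.
  - destruct k.
    + rewrite rsum_zero. simpl; ring. intros; rewrite Dl_esym_0; ring.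
    + rewrite rsum_S. rewrite (rsum_ext n _ (fun i => z i * Dl (esym n (S k)) z i + z n * (z i * Dl (esym n k) z i))).
      2: { intros; rewrite Dl_esym_S by auto; ring. }
      rewrite rsum_plus, rsum_scal, !IHn, Dl_esym_last, esym_S, !S_INR. ring.
Qed.

Definition lam d io a (j : nat) := d - 1 + io + a * INR j.
Definition mu r a (j : nat) := - a * INR (r - 1 - j).
Definition Lam d io a k := rprod k (lam d io a).
Definition Mu r a k m := rprod (m - k) (fun i => mu r a (k + i)).
Definition gam r a d io m k := Lam d io a k * Mu r a k m.
Definition Sz r a d io m (z : nat -> R) := rsum (S m) (fun k => gam r a d io m k * esym m k z).

Lemma rsum_comm n p (F : nat -> nat -> R) :
  rsum n (fun i => rsum p (fun k => F i k)) = rsum p (fun k => rsum n (fun i => F i k)).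
Proof.
  induction n; simpl. rewrite rsum_zero; auto.
  rewrite IHn, <- rsum_plus. auto.
Qed.
Lemma rsum_minus n F G : rsum n (fun k => F k - G k) = rsum n F - rsum n G.
Proof. induction n; simpl; [lra|rewrite IHn; lra]. Qed.
Lemma rsum_const n c : rsum n (fun _ => c) = INR n * c.
Proof. induction n; simpl rsum; [simpl; ring|rewrite IHn, S_INR; ring]. Qed.

Lemma Dl_Sz r a d io m z i :
  Dl (Sz r a d io m) z i = rsum (S m) (fun k => gam r a d io m k * Dl (esym m k) z i).
Proof. unfold Dl, Sz. rewrite <- rsum_minus. apply rsum_ext; intros; ring. Qed.

Lemma Sz_affine r a d io m z i w :
  Sz r a d io m (upd z i w) = Sz r a d io m (upd z i 0) + w * Dl (Sz r a d io m) z i.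
Proof.
  rewrite Dl_Sz. unfold Sz. rewrite <- rsum_scal, <- rsum_plus. apply rsum_ext; intros k _.
  rewrite esym_affine. unfold Dl. ring.
Qed.

Lemma Sz_ext r a d io m z z' : (forall j, (j < m)%nat -> z j = z' j) -> Sz r a d io m z = Sz r a d io m z'.
Proof. intros H. unfold Sz. apply rsum_ext; intros. rewrite (esym_ext _ _ z z'); auto. Qed.

Lemma esym_sum_S m (c : nat -> R) z :
  rsum (S (S m)) (fun k => c k * esym (S m) k z) =
  rsum (S m) (fun k => c k * esym m k z) + z m * rsum (S m) (fun k => c (S k) * esym m k z).
Proof.
  rewrite rsum_shift. rewrite (rsum_shift m (fun k => c k * esym m k z)).
  rewrite (rsum_ext (S m) (fun k => c (S k) * esym (S m) (S k) z)
            (fun k => c (S k) * esym m (S k) z + z m * (c (S k) * esym m k z))).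
  2: { intros; rewrite esym_S; ring. }
  rewrite rsum_plus, rsum_scal. rewrite !esym_0.
  rewrite (rsum_S m (fun k => c (S k) * esym m (S k) z)). rewrite (esym_big m (S m)) by lia. ring.
Qed.

Lemma INR_sub_le n k : (k <= n)%nat -> INR (n - k) = INR n - INR k.
Proof. intros; rewrite minus_INR; auto. Qed.

Lemma Mu_shift r a k m : (k < m)%nat -> Mu r a k m = mu r a k * Mu r a (S k) m.
Proof.
  intros H. unfold Mu. replace (m - k)%nat with (S (m - S k)) by lia. rewrite rprod_shift.
  rewrite Nat.add_0_r. f_equal. apply rprod_ext; intros; f_equal; lia.
Qed.
Lemma Mu_last r a k m : (k <= m)%nat -> Mu r a k (S m) = Mu r a k m * mu r a m.
Proof.
  intros H. unfold Mu. replace (S m - k)%nat with (S (m - k)) by lia. simpl. f_equal. f_equal. lia.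
Qed.
Lemma Mu_nil r a k m : (m <= k)%nat -> Mu r a k m = 1.
Proof. intros H; unfold Mu. replace (m - k)%nat with O by lia. auto. Qed.

Lemma gam_rec0 r a d io m k : (k <= m)%nat ->
  mu r a m * gam r a d io m k = gam r a d io (S m) k.
Proof. intros H; unfold gam. rewrite Mu_last by auto. ring. Qed.
Lemma gam_rec1 r a d io m k : (m < r)%nat -> (k <= m)%nat ->
  lam d io a 0 * gam r a d io m k + a * (INR m - INR k) * gam r a d io m (S k)
  + a * INR k * gam r a d io m k = gam r a d io (S m) (S k).
Proof.
  intros Hr H. unfold gam, Lam. simpl rprod.
  destruct (Nat.eq_dec k m).
  - subst. rewrite !Mu_nil by lia. unfold lam. rewrite INR_0. ring.
  - rewrite (Mu_shift r a k m) by lia. rewrite (Mu_last r a (S k) m) by lia.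
    unfold mu, lam. rewrite (INR_sub_le (r - 1) k), (INR_sub_le (r - 1) m) by lia. rewrite INR_0. ring.
Qed.

Lemma sumD_Sz r a d io m z :
  rsum m (fun i => Dl (Sz r a d io m) z i) =
  rsum (S m) (fun k => gam r a d io m (S k) * ((INR m - INR k) * esym m k z)).
Proof.
  rewrite (rsum_ext m _ (fun i => rsum (S m) (fun k => gam r a d io m k * Dl (esym m k) z i)))
    by (intros; apply Dl_Sz).
  rewrite rsum_comm.
  rewrite (rsum_ext (S m) _ (fun k => gam r a d io m k * rsum m (fun i => Dl (esym m k) z i)))
    by (intros; rewrite <- rsum_scal; auto).
  rewrite rsum_shift. rewrite (rsum_zero m (fun i => Dl (esym m 0) z i)) by (intros; apply Dl_esym_0).
  rewrite (rsum_S m (fun k => gam r a d io m (S k) * ((INR m - INR k) * esym m k z))).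
  rewrite (rsum_ext m _ (fun k => gam r a d io m (S k) * ((INR m - INR k) * esym m k z)))
    by (intros; rewrite sum_Dl_esym; auto).
  ring.
Qed.
Lemma sumzD_Sz r a d io m z :
  rsum m (fun i => z i * Dl (Sz r a d io m) z i) =
  rsum (S m) (fun k => gam r a d io m k * (INR k * esym m k z)).
Proof.
  rewrite (rsum_ext m _ (fun i => rsum (S m) (fun k => z i * (gam r a d io m k * Dl (esym m k) z i))))
    by (intros; rewrite Dl_Sz, rsum_scal; auto).
  rewrite rsum_comm. apply rsum_ext; intros k _.
  rewrite <- sum_zDl_esym, <- rsum_scal. apply rsum_ext; intros; ring.
Qed.

Lemma Sz_step r a d io m z : (m < r)%nat ->
  (lam d io a 0 * z m + mu r a m) * Sz r a d io m z
  + a * z m * (rsum m (fun i => Dl (Sz r a d io m) z i) + rsum m (fun i => z i * Dl (Sz r a d io m) z i))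
  = Sz r a d io (S m) z.
Proof.
  intros Hm. rewrite sumD_Sz, sumzD_Sz. unfold Sz at 2. rewrite esym_sum_S.
  unfold Sz.
  rewrite <- (rsum_ext (S m) (fun k => mu r a m * (gam r a d io m k * esym m k z))
     (fun k => gam r a d io (S m) k * esym m k z))
    by (intros; rewrite <- gam_rec0 by lia; ring).
  rewrite <- (rsum_ext (S m) (fun k => lam d io a 0 * (gam r a d io m k * esym m k z)
      + a * (gam r a d io m (S k) * ((INR m - INR k) * esym m k z))
      + a * (gam r a d io m k * (INR k * esym m k z)))
     (fun k => gam r a d io (S m) (S k) * esym m k z))
    by (intros; rewrite <- gam_rec1 by lia; ring).
  rewrite !rsum_plus, !rsum_scal. ring.
Qed.

Definition zf (u : pt) : nat -> R := fun j => u j - 1.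
Definition Yp m (u : pt) := rprod m (fun j => 1 + u j).
Definition Em r a d io m (u : pt) := Yp m u * Sz r a d io m (zf u).

Lemma Yp_upd m u i x : (i < m)%nat -> Yp m (upd u i x) = (1 + x) * Yp m (upd u i 0).
Proof.
  intros H. unfold Yp. rewrite (rprod_excl m _ i H), (rprod_excl m (fun j => 1 + upd u i 0 j) i H).
  unfold upd at 1 3. rewrite Nat.eqb_refl.
  rewrite (rprod_ext m (excl (fun j => 1 + upd u i x j) i) (excl (fun j => 1 + upd u i 0 j) i)). ring.
  intros k _. unfold excl, upd. destruct (Nat.eqb k i); auto.
Qed.
Lemma zf_upd u i x : zf (upd u i x) = upd (zf u) i (x - 1).
Proof. apply functional_extensionality; intros k; unfold zf, upd. destruct (Nat.eqb k i); auto. Qed.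
Lemma Em_ext r a d io m u v : (forall j, (j < m)%nat -> u j = v j) -> Em r a d io m u = Em r a d io m v.
Proof.
  intros H. unfold Em, Yp. rewrite (rprod_ext m _ (fun j => 1 + v j)) by (intros; rewrite H; auto).
  rewrite (Sz_ext r a d io m (zf u) (zf v)); auto. intros; unfold zf; rewrite H; auto.
Qed.
Lemma Em_struct r a d io m u i x : (i < m)%nat ->
  Em r a d io m (upd u i x) = (1 + x) * Yp m (upd u i 0) *
    (Sz r a d io m (upd (zf u) i 0) + (x - 1) * Dl (Sz r a d io m) (zf u) i).
Proof.
  intros H. unfold Em. rewrite Yp_upd, zf_upd, Sz_affine by auto. ring.
Qed.
Lemma Yp_split m u i : (i < m)%nat -> Yp m u = (1 + u i) * Yp m (upd u i 0).
Proof. intros H. rewrite <- (Yp_upd m u i (u i) H), upd_same. auto. Qed.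

Lemma I1_i r a d io m u i : (i < m)%nat -> u i <> u m -> u i <> - u m ->
  - (Kswap (u i) (u m) * (Em r a d io m u - Em r a d io m (upd u i (u m))))
  + Ksig (u m) (u i) * (Em r a d io m u - Em r a d io m (upd u i (- u m)))
  = u m * Em r a d io m u.
Proof.
  intros Hi H1 H2.
  assert (EE : Em r a d io m u = Em r a d io m (upd u i (u i))) by (rewrite upd_same; auto).
  rewrite EE. rewrite !Em_struct by auto.
  set (Yr := Yp m (upd u i 0)). set (S0 := Sz r a d io m (upd (zf u) i 0)).
  set (D := Dl (Sz r a d io m) (zf u) i). set (p := u i). set (q := u m).
  unfold Kswap, Ksig. field. split; intros E; [apply H1|apply H2]; unfold p, q in *; lra.
Qed.

Lemma I2_i r a d io m u i : (i < m)%nat -> u i <> u m -> u i <> - u m ->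
  - (Kswap (u i) (u m) * ((1 + u m) * Em r a d io m u - (1 + u i) * Em r a d io m (upd u i (u m))))
  + Ksig (u m) (u i) * ((1 + u m) * Em r a d io m u - (1 - u i) * Em r a d io m (upd u i (- u m)))
  = (1 + u m) * (Em r a d io m u + (u m - 1) * Yp m u * u i * Dl (Sz r a d io m) (zf u) i).
Proof.
  intros Hi H1 H2. rewrite (Yp_split m u i Hi).
  assert (EE : Em r a d io m u = Em r a d io m (upd u i (u i))) by (rewrite upd_same; auto).
  rewrite EE. rewrite !Em_struct by auto.
  set (Yr := Yp m (upd u i 0)). set (S0 := Sz r a d io m (upd (zf u) i 0)).
  set (D := Dl (Sz r a d io m) (zf u) i). set (p := u i). set (q := u m).
  unfold Kswap, Ksig. field. split; intros E; [apply H1|apply H2]; unfold p, q in *; lra.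
Qed.

Definition ureg r (u : pt) := (forall i j, (i < r)%nat -> (j < r)%nat -> i <> j -> u i <> u j /\ u i <> - u j)
  /\ (forall j, (j < r)%nat -> u j <> 0).

Lemma rsum_split_le m n F : (m <= n)%nat -> rsum n F = rsum m F + rsum (n - m) (fun k => F (m + k)%nat).
Proof. intros H. rewrite <- rsum_split. f_equal. lia. Qed.

Lemma rsum_opp n F : rsum n (fun k => - F k) = - rsum n F.
Proof. induction n; simpl; [lra|rewrite IHn; lra]. Qed.

Lemma Em_swap_near r a d io m u i : (i < m)%nat -> Em r a d io m (swap i m u) = Em r a d io m (upd u i (u m)).
Proof. intros H; apply Em_ext; intros j Hj; unfold swap, upd. destruct (Nat.eqb j i); auto.
  destruct (Nat.eqb_spec j m); [lia|auto]. Qed.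
Lemma Em_sig_near r a d io m u i : (i < m)%nat -> Em r a d io m (sigma2 m i u) = Em r a d io m (upd u i (- u m)).
Proof. intros H; apply Em_ext; intros j Hj; unfold sigma2, upd. destruct (Nat.eqb_spec j m); [lia|].
  destruct (Nat.eqb j i); auto. Qed.
Lemma Em_swap_far r a d io m u k : (m < k)%nat -> Em r a d io m (swap m k u) = Em r a d io m u.
Proof. intros H; apply Em_ext; intros j Hj; unfold swap. destruct (Nat.eqb_spec j m); [lia|].
  destruct (Nat.eqb_spec j k); [lia|auto]. Qed.
Lemma Em_sig_far r a d io m u k : (m < k)%nat -> Em r a d io m (sigma2 m k u) = Em r a d io m u.
Proof. intros H; apply Em_ext; intros j Hj; unfold sigma2. destruct (Nat.eqb_spec j m); [lia|].
  destruct (Nat.eqb_spec j k); [lia|auto]. Qed.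
Lemma Em_sig1 r a d io m u : Em r a d io m (sigma1 m u) = Em r a d io m u.
Proof. apply Em_ext; intros j Hj; unfold sigma1. destruct (Nat.eqb_spec j m); [lia|auto]. Qed.
Lemma Em_upd_m r a d io m u x : Em r a d io m (upd u m x) = Em r a d io m u.
Proof. apply Em_ext; intros j Hj; unfold upd. destruct (Nat.eqb_spec j m); [lia|auto]. Qed.

Lemma rho_m r a b io m : (m < r)%nat -> rho r a b io m = rho r a b io 0 - a * INR m.
Proof.
  intros H. unfold rho. rewrite Nat.sub_0_r. rewrite (INR_sub_le (r - 1) m) by lia. ring.
Qed.

Lemma I1 r a b io d m u : (m < r)%nat -> ureg r u ->
  TQ r a b io d m (Em r a d io m) 0 u =
  (d + a * INR m) * ((1 + u m) * Em r a d io m u) - (d + rho r a b io 0) * Em r a d io m u.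
Proof.
  intros Hm [R R0]. unfold TQ. set (E := Em r a d io m).
  rewrite (rsum_zero r (fun k => if Nat.ltb m k then Kswap (u m) (u k) * (E u - E (swap m k u)) else 0)).
  2: { intros k Hk. destruct (Nat.ltb_spec m k); auto. unfold E; rewrite Em_swap_far by auto. ring. }
  rewrite (rsum_split_le m r) by lia.
  rewrite (rsum_ext m (fun k => if Nat.eqb k m then 0 else Ksig (u m) (u k) * (E u - E (sigma2 m k u)))
     (fun k => Ksig (u m) (u k) * (E u - E (upd u k (- u m))))).
  2: { intros k Hk. destruct (Nat.eqb_spec k m); [lia|]. unfold E; rewrite Em_sig_near; auto. }
  rewrite (rsum_zero (r - m)).
  2: { intros k Hk. destruct (Nat.eqb_spec (m + k) m); auto. unfold E; rewrite Em_sig_far by lia. ring. }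
  rewrite (rsum_ext m (fun i => Kswap (u i) (u m) * (E u - E (swap i m u)))
     (fun i => Kswap (u i) (u m) * (E u - E (upd u i (u m))))).
  2: { intros i Hi. unfold E; rewrite Em_swap_near; auto. }
  assert (S : rsum m (fun k => Ksig (u m) (u k) * (E u - E (upd u k (- u m)))) =
              rsum m (fun i => Kswap (u i) (u m) * (E u - E (upd u i (u m)))) + INR m * (u m * E u)).
  { rewrite <- rsum_const, <- rsum_plus. apply rsum_ext; intros i Hi.
    unfold E. rewrite <- (I1_i r a d io m u i Hi). ring. apply (R i m); lia. apply (R i m); lia. }
  rewrite S. unfold E. rewrite Em_sig1, rho_m by auto. ring.
Qed.

Lemma I2 r a b io d m u : (m < r)%nat -> ureg r u ->
  TQ r a b io d m (fun v => (1 + v m) * Em r a d io m v) (Em r a d io m u) u =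
  (d + rho r a b io 0) * ((1 + u m) * Em r a d io m u) + Em r a d io (S m) u.
Proof.
  intros Hm [R R0]. unfold TQ. set (E := Em r a d io m).
  set (q := u m).
  rewrite (rsum_ext m (fun i => Kswap (u i) q * ((1 + q) * E u - (1 + swap i m u m) * E (swap i m u)))
     (fun i => Kswap (u i) q * ((1 + q) * E u - (1 + u i) * E (upd u i q)))).
  2: { intros i Hi. unfold E; rewrite Em_swap_near by auto. unfold swap at 1.
       destruct (Nat.eqb_spec m i); [lia|]. rewrite Nat.eqb_refl. auto. }
  rewrite (rsum_split_le m r (fun k => if Nat.ltb m k then Kswap q (u k) * ((1 + q) * E u - (1 + swap m k u m) * E (swap m k u)) else 0)) by lia.
  rewrite (rsum_zero m (fun k => if Nat.ltb m k then _ else 0)).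
  2: { intros k Hk. destruct (Nat.ltb_spec m k); [lia|auto]. }
  rewrite (rsum_ext (r - m) (fun k => if Nat.ltb m (m + k) then Kswap q (u (m + k)%nat) * ((1 + q) * E u - (1 + swap m (m + k) u m) * E (swap m (m + k) u)) else 0)
     (fun k => if Nat.eqb k 0 then 0 else Kswap q (u (m + k)%nat) * ((1 + q) * E u - (1 + u (m + k)%nat) * E u))).
  2: { intros k Hk. destruct (Nat.ltb_spec m (m + k)); destruct (Nat.eqb_spec k 0); try lia; auto.
       unfold E; rewrite Em_swap_far by lia. unfold swap. rewrite Nat.eqb_refl. auto. }
  rewrite (rsum_split_le m r (fun k => if Nat.eqb k m then 0 else Ksig q (u k) * ((1 + q) * E u - (1 + sigma2 m k u m) * E (sigma2 m k u)))) by lia.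
  rewrite (rsum_ext m (fun k => if Nat.eqb k m then 0 else Ksig q (u k) * ((1 + q) * E u - (1 + sigma2 m k u m) * E (sigma2 m k u)))
     (fun k => Ksig q (u k) * ((1 + q) * E u - (1 - u k) * E (upd u k (- q))))).
  2: { intros k Hk. destruct (Nat.eqb_spec k m); [lia|]. unfold E; rewrite Em_sig_near by auto.
       unfold sigma2 at 1. rewrite Nat.eqb_refl. fold q. ring. }
  rewrite (rsum_ext (r - m) (fun k => if Nat.eqb (m + k) m then 0 else Ksig q (u (m + k)%nat) * ((1 + q) * E u - (1 + sigma2 m (m + k) u m) * E (sigma2 m (m + k) u)))
     (fun k => if Nat.eqb k 0 then 0 else Ksig q (u (m + k)%nat) * ((1 + q) * E u - (1 - u (m + k)%nat) * E u))).
  2: { intros k Hk. destruct (Nat.eqb_spec (m + k) m); destruct (Nat.eqb_spec k 0); try lia; auto.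
       unfold E; rewrite Em_sig_far by lia. unfold sigma2. rewrite Nat.eqb_refl. ring. }
  assert (F : rsum (r - m) (fun k => if Nat.eqb k 0 then 0 else Kswap q (u (m + k)%nat) * ((1 + q) * E u - (1 + u (m + k)%nat) * E u))
            + rsum (r - m) (fun k => if Nat.eqb k 0 then 0 else Ksig q (u (m + k)%nat) * ((1 + q) * E u - (1 - u (m + k)%nat) * E u))
            = INR (r - 1 - m) * ((1 + q) * E u)).
  { rewrite <- rsum_plus. replace (r - m)%nat with (S (r - 1 - m)) by lia. rewrite rsum_shift. simpl Nat.eqb.
    rewrite <- rsum_const. rewrite !Rplus_0_l. apply rsum_ext. intros k Hk.
    destruct (R m (m + S k)%nat) as [N1 N2]; try lia. fold q in N1, N2.
    unfold Kswap, Ksig. field. split; intros Z; [apply N1|apply N2]; lra. }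
  assert (N : - rsum m (fun i => Kswap (u i) q * ((1 + q) * E u - (1 + u i) * E (upd u i q)))
          + rsum m (fun k => Ksig q (u k) * ((1 + q) * E u - (1 - u k) * E (upd u k (- q))))
          = (1 + q) * (INR m * E u + (q - 1) * Yp m u *
               (rsum m (fun i => Dl (Sz r a d io m) (zf u) i) + rsum m (fun i => zf u i * Dl (Sz r a d io m) (zf u) i)))).
  { set (D := fun i => Dl (Sz r a d io m) (zf u) i).
    transitivity (rsum m (fun i => (1 + q) * E u + ((1 + q) * (q - 1) * Yp m u) * (D i + zf u i * D i))).
    - replace (- rsum m (fun i => Kswap (u i) q * ((1 + q) * E u - (1 + u i) * E (upd u i q))))
        with (rsum m (fun i => - (Kswap (u i) q * ((1 + q) * E u - (1 + u i) * E (upd u i q)))))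
        by (rewrite rsum_opp; auto).
      rewrite <- rsum_plus. apply rsum_ext; intros i Hi.
      unfold E, q, D. rewrite (I2_i r a d io m u i Hi). unfold zf. ring.
      apply (R i m); lia. apply (R i m); lia.
    - rewrite rsum_plus, rsum_const, rsum_scal, rsum_plus. unfold D. ring. }
  set (A1 := rsum m (fun i => Kswap (u i) q * ((1 + q) * E u - (1 + u i) * E (upd u i q)))) in *.
  set (A3 := rsum m (fun k => Ksig q (u k) * ((1 + q) * E u - (1 - u k) * E (upd u k (- q))))) in *.
  set (A2 := rsum (r - m) (fun k => if Nat.eqb k 0 then 0 else Kswap q (u (m + k)%nat) * ((1 + q) * E u - (1 + u (m + k)%nat) * E u))) in *.
  set (A4 := rsum (r - m) (fun k => if Nat.eqb k 0 then 0 else Ksig q (u (m + k)%nat) * ((1 + q) * E u - (1 - u (m + k)%nat) * E u))) in *.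
  assert (A3e : A3 = A1 + (1 + q) * (INR m * E u + (q - 1) * Yp m u *
               (rsum m (fun i => Dl (Sz r a d io m) (zf u) i) + rsum m (fun i => zf u i * Dl (Sz r a d io m) (zf u) i)))) by lra.
  assert (A4e : A4 = INR (r - 1 - m) * ((1 + q) * E u) - A2) by lra.
  rewrite A3e, A4e. clear A3e A4e N F.
  assert (S1 : (1 + sigma1 m u m) * E (sigma1 m u) = (1 - q) * E u)
    by (unfold E; rewrite Em_sig1; unfold sigma1; rewrite Nat.eqb_refl; fold q; ring).
  rewrite S1.
  assert (ES : Em r a d io (S m) u = Yp m u * (1 + q) * Sz r a d io (S m) (zf u))
    by (unfold Em; replace (Yp (S m) u) with (Yp m u * (1 + q)) by reflexivity; ring).
  rewrite ES.
  rewrite <- (Sz_step r a d io m (zf u) Hm).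
  replace (zf u m) with (q - 1) by (unfold zf; auto). unfold E, Em.
  rewrite rho_m by auto. unfold K1, K2, mu, lam, rho. rewrite INR_0, Nat.sub_0_r.
  rewrite (INR_sub_le (r - 1) m) by lia.
  assert (q <> 0) by (apply R0; auto).
  field. auto.
Qed.


Lemma TQ_lin r a b io d j al be Q1 Q2 d1 d2 u :
  TQ r a b io d j (fun v => al * Q1 v + be * Q2 v) (al * d1 + be * d2) u =
  al * TQ r a b io d j Q1 d1 u + be * TQ r a b io d j Q2 d2 u.
Proof.
  unfold TQ.
  rewrite (rsum_ext j (fun i => Kswap (u i) (u j) * (al * Q1 u + be * Q2 u - (al * Q1 (swap i j u) + be * Q2 (swap i j u))))
    (fun i => al * (Kswap (u i) (u j) * (Q1 u - Q1 (swap i j u))) + be * (Kswap (u i) (u j) * (Q2 u - Q2 (swap i j u)))))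
    by (intros; ring).
  rewrite (rsum_ext r (fun k => if Nat.ltb j k then Kswap (u j) (u k) * (al * Q1 u + be * Q2 u - (al * Q1 (swap j k u) + be * Q2 (swap j k u))) else 0)
    (fun k => al * (if Nat.ltb j k then Kswap (u j) (u k) * (Q1 u - Q1 (swap j k u)) else 0)
            + be * (if Nat.ltb j k then Kswap (u j) (u k) * (Q2 u - Q2 (swap j k u)) else 0)))
    by (intros; destruct (Nat.ltb j k); ring).
  rewrite (rsum_ext r (fun k => if Nat.eqb k j then 0 else Ksig (u j) (u k) * (al * Q1 u + be * Q2 u - (al * Q1 (sigma2 j k u) + be * Q2 (sigma2 j k u))))
    (fun k => al * (if Nat.eqb k j then 0 else Ksig (u j) (u k) * (Q1 u - Q1 (sigma2 j k u)))
            + be * (if Nat.eqb k j then 0 else Ksig (u j) (u k) * (Q2 u - Q2 (sigma2 j k u)))))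
    by (intros; destruct (Nat.eqb k j); ring).
  rewrite !rsum_plus, !rsum_scal. ring.
Qed.

Lemma ureg_Uv r t : regular r t -> ureg r (Uv t).
Proof.
  intros [R1 R2]. split.
  - intros i j Hi Hj Hij. destruct (R2 i j Hi Hj Hij) as [N1 N2]. unfold Uv. split.
    + intros E; apply N1; apply th_inj; auto.
    + intros E; apply N2; apply th_inj. rewrite th_opp; auto.
  - intros j Hj. unfold Uv. apply th_nz, R1; auto.
Qed.

Definition Pp d a m := rprod m (fun j => d + a * INR j).
Definition Gm r a d io m (u : pt) := Pp d a m * Em r a d io m u.

Lemma step r a b io d m : (m < r)%nat ->
  (forall t, regular r t -> prod_ops m r a b io (d + rho r a b io 0) (f_can r d) t = FQ r d (Gm r a d io m) t) ->
  (forall t, regular r t -> prod_ops (S m) r a b io (d + rho r a b io 0) (f_can r d) t = FQ r d (Gm r a d io (S m)) t).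
Proof.
  intros Hm IH t Rt.
  set (c := d + rho r a b io 0).
  set (H := prod_ops m r a b io c (f_can r d)).
  set (P := Pp d a m).
  set (G1 := fun v => (P * (d + a * INR m)) * ((1 + v m) * Em r a d io m v) + (- P * c) * Em r a d io m v).
  assert (A : forall t', regular r t' -> cherednik r a b io m H t' = FQ r d G1 t').
  { intros t' Rt'. rewrite (cher_local r a b io m H (FQ r d (Gm r a d io m)) t' IH Rt' Hm).
    rewrite (cher_FQ r a b io d m (Gm r a d io m) 0 t' Hm Rt').
    2: { apply (is_derive_ext (fun _ => Gm r a d io m (Uv t'))). intros x. unfold Gm. rewrite Em_upd_m. auto.
         auto_derive; auto. }
    replace (Gm r a d io m) with (fun v => P * Em r a d io m v + 0 * Em r a d io m v)
      by (apply functional_extensionality; intros; unfold Gm; fold P; ring).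
    replace 0 with (P * 0 + 0 * 0) at 1 by ring. rewrite TQ_lin.
    rewrite I1 by (auto; apply ureg_Uv; auto).
    unfold FQ, G1. fold c. ring. }
  simpl. unfold factor_op. fold c H.
  rewrite (cher_local r a b io m (cherednik r a b io m H) (FQ r d G1) t A Rt Hm).
  rewrite (cher_FQ r a b io d m G1 ((P * (d + a * INR m)) * Em r a d io m (Uv t) + (- P * c) * 0) t Hm Rt).
  2: { apply (is_derive_ext (fun x => (P * (d + a * INR m)) * ((1 + x) * Em r a d io m (Uv t)) + (- P * c) * Em r a d io m (Uv t))).
       intros x. unfold G1. rewrite !Em_upd_m. unfold upd. rewrite Nat.eqb_refl. auto.
       auto_derive; auto. ring. }
  unfold G1. rewrite TQ_lin. rewrite I1, I2 by (auto; apply ureg_Uv; auto).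
  assert (Ht : H t = FQ r d (Gm r a d io m) t) by (apply IH; auto). rewrite Ht. unfold FQ, Gm. fold P c.
  replace (Pp d a (S m)) with (P * (d + a * INR m)) by reflexivity.
  ring.
Qed.

Lemma all_steps r a b io d m : (m <= r)%nat ->
  forall t, regular r t -> prod_ops m r a b io (d + rho r a b io 0) (f_can r d) t = FQ r d (Gm r a d io m) t.
Proof.
  induction m; intros Hm t Rt.
  - simpl. unfold FQ, Gm, Pp, Em, Yp, Sz, gam, Lam, Mu. simpl. ring.
  - apply step; auto. apply IHm. lia.
Qed.

Lemma Mu_zero r a k : (k < r)%nat -> Mu r a k r = 0.
Proof.
  intros H. unfold Mu. rewrite (rprod_excl (r - k) _ (r - k - 1)) by lia.
  replace (k + (r - k - 1))%nat with (r - 1)%nat by lia. unfold mu.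
  rewrite Nat.sub_diag. simpl INR. ring.
Qed.

Lemma Gm_final r a d io u :
  Gm r a d io r u = Pp d a r * Lam d io a r * rprod r (fun j => (1 + u j) * (u j - 1)).
Proof.
  unfold Gm, Em, Sz. rewrite rsum_S.
  rewrite (rsum_zero r) by (intros k Hk; unfold gam; rewrite Mu_zero by auto; ring).
  rewrite esym_top. unfold gam. rewrite Mu_nil by lia. rewrite rprod_mult. unfold Yp, zf. ring.
Qed.

Lemma hc_id d x : hc d x * ((1 + th x) * (th x - 1)) = - hc (d - 2) x.
Proof.
  unfold hc. replace (d - 2) with (d + - INR 2) by (simpl; ring).
  rewrite Rpower_plus, Rpower_Ropp, Rpower_pow by apply cosh_pos.
  assert (C := cosh_pos x). unfold th. unfold cosh in *.
  rewrite exp_Ropp in *. assert (exp x > 0) by apply exp_pos.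
  simpl. field. split; nra.
Qed.

Theorem theorem2p1 (r : nat) (a b iota : R) :
  (1 <= r)%nat -> 0 < a -> 0 < b -> 0 < iota ->
  forall delta : R, forall t : pt, regular r t ->
    prod_ops r r a b iota (delta + rho r a b iota 0) (f_can r delta) t =
    rprod r (fun j => (delta + a * INR j) * (1 - delta - iota - a * INR (r - 1 - j)))
      * f_can r (delta - 2) t.
Proof.
  intros Hr Ha Hb Hi d t Rt.
  rewrite (all_steps r a b iota d r (le_n r) t Rt).
  unfold FQ. rewrite Gm_final.
  rewrite (rprod_mult r (fun j => d + a * INR j) (fun j => 1 - d - iota - a * INR (r - 1 - j))).
  rewrite (rprod_ext r (fun j => 1 - d - iota - a * INR (r - 1 - j)) (fun j => (fun k => - lam d iota a k) (r - 1 - j)%nat))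
    by (intros; unfold lam; ring).
  rewrite (rprod_rev r (fun k => - lam d iota a k)). fold (Pp d a r).
  assert (E1 : f_can r d t * rprod r (fun j => (1 + Uv t j) * (Uv t j - 1)) = rprod r (fun j => - hc (d - 2) (t j))).
  { unfold f_can. rewrite <- rprod_mult. apply rprod_ext; intros. unfold Uv. rewrite <- hc_id. unfold hc. auto. }
  assert (E2 : Lam d iota a r * rprod r (fun j => - hc (d - 2) (t j)) = rprod r (fun k => - lam d iota a k) * f_can r (d - 2) t).
  { unfold Lam, f_can. rewrite <- !rprod_mult. apply rprod_ext; intros. unfold hc. ring. }
  transitivity (Pp d a r * (Lam d iota a r * (f_can r d t * rprod r (fun j => (1 + Uv t j) * (Uv t j - 1))))).
  - ring.
  - rewrite E1, E2. ring.
Qed.
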